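(* Let $K$ be a field of characteristic zero, $W_n$ the Witt Lie algebra and $\sigma\in\mathrm{Aut}_{\mathrm{Lie}}(W_n)$. Then for every $\alpha\in\mathbb{Z}^n$ (viewed as a column vector) one has $\sigma(x^\alpha\mathcal{H}_n)=x^{A_{\sigma^{-1}}\alpha}\mathcal{H}_n$; in particular $A_{\sigma^{-1}}\alpha\in\mathbb{Z}^n$.
   Context: $W_n=\mathrm{Der}_K(K[x_1^{\pm1},\ldots,x_n^{\pm1}])=\bigoplus_{\alpha\in\mathbb{Z}^n}x^\alpha\mathcal{H}_n$, $x^\alpha=x_1^{\alpha_1}\cdots x_n^{\alpha_n}$, $\mathcal{H}_n=\bigoplus_iKH_i$, $H_i=x_i\partial_i$. Every Lie automorphism $\tau$ of $W_n$ satisfies $\tau(\mathcal{H}_n)=\mathcal{H}_n$, so there is a unique matrix $A_\tau=(a_{ij})\in\mathrm{GL}_n(K)$ with $\tau(H_i)=\sum_j a_{ij}H_j$ for all $i$, i.e. $\tau(H)=A_\tau H$ with $H=(H_1,\ldots,H_n)^T$. *)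

(* Defs.v *)
From HB Require Import structures.
From mathcomp Require Import all_boot all_order all_algebra.
From mathcomp Require Import finmap monalg.
Set Implicit Arguments. Unset Strict Implicit. Unset Printing Implicit Defensive.
Import Order.TTheory GRing.Theory Num.Theory.
Local Open Scope ring_scope.

(* Index of the basis element x^alpha H_i of W_n: the pair (alpha, i),
   alpha in Z^n as a column vector. *)
Definition wkey (n : nat) : choiceType := ('cV[int]_n * 'I_n)%type.

(* W_n = ⊕_{alpha} x^alpha H_n, as the K-vector space with basis
   { x^alpha H_i }, i.e. finitely supported functions Z^n x {1..n} -> K. *)
Definition Witt (K : fieldType) (n : nat) := {malg K[wkey n]}.

Definition wbasis (K : fieldType) (n : nat) (alpha : 'cV[int]_n) (i : 'I_n)
  : Witt K n := << (alpha, i) >>.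

(* H_i = x_i d_i = x^0 H_i *)
Definition wH (K : fieldType) (n : nat) (i : 'I_n) : Witt K n := wbasis K 0 i.

(* Bracket of basis elements, from the derivation action:
   [x^a H_i, x^b H_j] = b_i x^(a+b) H_j - a_j x^(a+b) H_i. *)
Definition wbr_basis (K : fieldType) (n : nat) (k1 k2 : wkey n) : Witt K n :=
  let: (a, i) := k1 in let: (b, j) := k2 in
  (b i 0)%:~R *: wbasis K (a + b) j - (a j 0)%:~R *: wbasis K (a + b) i.

Definition wbr (K : fieldType) (n : nat) (f g : Witt K n) : Witt K n :=
  \sum_(k1 <- msupp f) \sum_(k2 <- msupp g)
     (f@_k1 * g@_k2) *: wbr_basis K k1 k2.

Definition lie_hom (K : fieldType) (n : nat) (s : {linear Witt K n -> Witt K n}) :=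
  forall f g, s (wbr f g) = wbr (s f) (s g).

Definition in_xH (K : fieldType) (n : nat) (alpha : 'cV[int]_n) (f : Witt K n) :=
  forall k, k \in msupp f -> k.1 = alpha.

(* The matrix A_tau: tau(H_i) = sum_j a_ij H_j, so a_ij is the coefficient of
   x^0 H_j in tau(H_i) (tau(H_n) = H_n for every automorphism). *)
Definition Amat (K : fieldType) (n : nat) (t : Witt K n -> Witt K n) : 'M[K]_n :=
  \matrix_(i, j) (t (wH K i))@_((0 : 'cV[int]_n), j).

(* Main.v *)
Require Import Defs.
From HB Require Import structures.
From mathcomp Require Import all_boot all_order all_algebra.
From mathcomp Require Import finmap monalg.
Set Implicit Arguments. Unset Strict Implicit. Unset Printing Implicit Defensive.
Import Order.TTheory GRing.Theory Num.Theory.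
Local Open Scope ring_scope.
From Stdlib Require Import Classical.
From mathcomp Require Import ring.

Lemma wbrEw (K : fieldType) (n : nat) (f g : Witt K n) (d1 d2 : {fset wkey n}) :
  (msupp f `<=` d1)%fset -> (msupp g `<=` d2)%fset ->
  wbr f g = \sum_(k1 <- d1) \sum_(k2 <- d2) (f@_k1 * g@_k2) *: wbr_basis K k1 k2.
Proof.
move=> h1 h2; rewrite /wbr (big_fset_incl _ h1) /=; last first.
  by move=> x _ /mcoeff_outdom ->; rewrite big1 // => k2 _; rewrite mul0r scale0r.
apply: eq_bigr => k1 _; apply: big_fset_incl h2 _ => x _ /mcoeff_outdom ->.
by rewrite mulr0 scale0r.
Qed.

Lemma wbrDl (K : fieldType) (n : nat) c (f1 f2 g : Witt K n) :
  wbr (c *: f1 + f2) g = c *: wbr f1 g + wbr f2 g.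
Proof.
set d := (msupp f1 `|` msupp f2)%fset.
have s1 : (msupp f1 `<=` d)%fset by apply: fsubsetUl.
have s2 : (msupp f2 `<=` d)%fset by apply: fsubsetUr.
have s3 : (msupp (c *: f1 + f2) `<=` d)%fset.
  apply: fsubset_trans (msuppD_le _ _) _; apply: fsetUSS => //.
  exact: fsubset_trans (msuppZ_le _ _) _.
rewrite (wbrEw s3 (fsubset_refl _)) (wbrEw s1 (fsubset_refl _)) (wbrEw s2 (fsubset_refl _)).
rewrite scaler_sumr -big_split; apply: eq_bigr => k1 _.
rewrite scaler_sumr -big_split; apply: eq_bigr => k2 _.
by rewrite mcoeffD mcoeffZ scalerA mulrDl mulrA scalerDl.
Qed.

Lemma wbrDr (K : fieldType) (n : nat) c (f g1 g2 : Witt K n) :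
  wbr f (c *: g1 + g2) = c *: wbr f g1 + wbr f g2.
Proof.
set d := (msupp g1 `|` msupp g2)%fset.
have s1 : (msupp g1 `<=` d)%fset by apply: fsubsetUl.
have s2 : (msupp g2 `<=` d)%fset by apply: fsubsetUr.
have s3 : (msupp (c *: g1 + g2) `<=` d)%fset.
  apply: fsubset_trans (msuppD_le _ _) _; apply: fsetUSS => //.
  exact: fsubset_trans (msuppZ_le _ _) _.
rewrite (wbrEw (fsubset_refl _) s3) (wbrEw (fsubset_refl _) s1) (wbrEw (fsubset_refl _) s2).
rewrite scaler_sumr -big_split; apply: eq_bigr => k1 _.
rewrite scaler_sumr -big_split; apply: eq_bigr => k2 _.
by rewrite mcoeffD mcoeffZ scalerA mulrDr mulrCA scalerDl.
Qed.

Lemma wbr0l (K : fieldType) (n : nat) (g : Witt K n) : wbr 0 g = 0.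
Proof. have := wbrDl 1 (0 : Witt K n) 0 g; rewrite !scale1r addr0 => H.
by apply: (@addrI _ (wbr 0 g)); rewrite -H addr0. Qed.
Lemma wbr0r (K : fieldType) (n : nat) (g : Witt K n) : wbr g 0 = 0.
Proof. have := wbrDr 1 g (0 : Witt K n) 0; rewrite !scale1r addr0 => H.
by apply: (@addrI _ (wbr g 0)); rewrite -H addr0. Qed.
Lemma wbrAl (K : fieldType) (n : nat) (f1 f2 g : Witt K n) : wbr (f1 + f2) g = wbr f1 g + wbr f2 g.
Proof. by have := wbrDl 1 f1 f2 g; rewrite !scale1r. Qed.
Lemma wbrAr (K : fieldType) (n : nat) (f g1 g2 : Witt K n) : wbr f (g1 + g2) = wbr f g1 + wbr f g2.
Proof. by have := wbrDr 1 f g1 g2; rewrite !scale1r. Qed.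
Lemma wbrZl (K : fieldType) (n : nat) c (f g : Witt K n) : wbr (c *: f) g = c *: wbr f g.
Proof. by rewrite -[c *: f]addr0 wbrDl wbr0l addr0. Qed.
Lemma wbrZr (K : fieldType) (n : nat) c (f g : Witt K n) : wbr f (c *: g) = c *: wbr f g.
Proof. by rewrite -[c *: g]addr0 wbrDr wbr0r addr0. Qed.
Lemma wbrNl (K : fieldType) (n : nat) (f g : Witt K n) : wbr (- f) g = - wbr f g.
Proof. by rewrite -scaleN1r wbrZl scaleN1r. Qed.
Lemma wbrBl (K : fieldType) (n : nat) (f1 f2 g : Witt K n) : wbr (f1 - f2) g = wbr f1 g - wbr f2 g.
Proof. by rewrite wbrAl wbrNl. Qed.

Lemma wbr_sumr (K : fieldType) (n : nat) (f : Witt K n) (I : Type) (r : seq I) (P : pred I) F :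
  wbr f (\sum_(i <- r | P i) F i) = \sum_(i <- r | P i) wbr f (F i).
Proof. apply: (big_rec2 (fun x y => wbr f x = y)); first exact: wbr0r.
by move=> i x y _ <-; rewrite wbrAr. Qed.
Lemma wbr_suml (K : fieldType) (n : nat) (g : Witt K n) (I : Type) (r : seq I) (P : pred I) F :
  wbr (\sum_(i <- r | P i) F i) g = \sum_(i <- r | P i) wbr (F i) g.
Proof. apply: (big_rec2 (fun x y => wbr x g = y)); first exact: wbr0l.
by move=> i x y _ <-; rewrite wbrAl. Qed.

Lemma wbrU (K : fieldType) (n : nat) (k1 k2 : wkey n) :
  wbr (<< k1 >> : Witt K n) << k2 >> = wbr_basis K k1 k2.
Proof.
rewrite (@wbrEw K n _ _ [fset k1]%fset [fset k2]%fset msuppU_le msuppU_le) !big_seq_fset1.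
by rewrite !mcoeffUU mulr1 scale1r.
Qed.

Definition dotK (K : fieldType) (n : nat) (d : 'I_n -> K) (v : 'cV[int]_n) : K :=
  \sum_j d j * (v j 0)%:~R.

Definition hom (K : fieldType) (n : nat) (d : 'I_n -> K) (c : 'cV[int]_n) : Witt K n :=
  \sum_j d j *: << (c, j) >>.

Lemma mcU1 (K : fieldType) (n : nat) (k k' : wkey n) :
  (<< k >> : Witt K n)@_k' = (k == k')%:R.
Proof. exact: (@mcoeffU (wkey n) K k 1 k'). Qed.

Lemma malgUZ (K : fieldType) (n : nat) (x : K) (k : wkey n) :
  << x *g k >> = x *: (<< k >> : Witt K n).
Proof.
apply/malgP => k0.
have H := @mcoeffU (wkey n) K k x k0.
rewrite mcoeffZ [X in _ = _ * X]mcU1; apply: (etrans H).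
by rewrite mulr_natr.
Qed.

Lemma malg_decomp (K : fieldType) (n : nat) (F : Witt K n) :
  F = \sum_(k <- msupp F) F@_k *: << k >>.
Proof.
rewrite {1}(monalgE F); apply: eq_bigr => k _; exact: malgUZ.
Qed.

Lemma mcZU (K : fieldType) (n : nat) (c : K) (k k' : wkey n) :
  (c *: (<< k >> : Witt K n))@_k' = c * (k == k')%:R.
Proof. by rewrite mcoeffZ mcU1. Qed.

Lemma coef_diag (K : fieldType) (n : nat) (F : Witt K n) (G : wkey n -> K) k :
  (\sum_(k' <- msupp F) (F@_k' * G k') *: (<< k' >> : Witt K n))@_k = F@_k * G k.
Proof.
rewrite raddf_sum /=; under eq_bigr do rewrite mcZU.
have [kF|kF] := boolP (k \in msupp F).
  rewrite (big_fsetD1 k) //= eqxx mulr1 big1_fset ?addr0 // => k'.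
  by rewrite in_fsetD1 => /andP[/negbTE -> _] _; rewrite mulr0.
rewrite big1_fset; first by rewrite (mcoeff_outdom kF) mul0r.
move=> k' k'F _; case: eqP => [e|]; last by rewrite mulr0.
by rewrite -e k'F in kF.
Qed.

Lemma homE (K : fieldType) (n : nat) d c (k : wkey n) :
  (@hom K n d c)@_k = if k.1 == c then d k.2 else 0.
Proof.
rewrite /hom raddf_sum /=; under eq_bigr do rewrite mcZU.
case: eqP => [e|ne].
  rewrite (bigD1 k.2) //= -e -surjective_pairing eqxx mulr1.
  rewrite big1 ?addr0 // => j /negbTE nj.
  case: eqP => [ej|]; last by rewrite mulr0.
  by rewrite -ej /= eqxx in nj.
rewrite big1 // => j _; case: eqP => [ej|]; last by rewrite mulr0.
by rewrite -ej in ne.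
Qed.

Lemma msupp_hom (K : fieldType) (n : nat) d c (k : wkey n) :
  k \in msupp (@hom K n d c) -> k.1 = c.
Proof. by rewrite -mcoeff_neq0 homE; case: (k.1 =P c) => // _; rewrite eqxx. Qed.

Lemma cartanE (K : fieldType) (n : nat) (g : Witt K n) :
  in_xH 0 g -> g = @hom K n (fun i => g@_(0, i)) 0.
Proof.
move=> H; apply/malgP => k; rewrite homE; case: eqP => [e|ne].
  by rewrite -e -surjective_pairing.
by apply: mcoeff_outdom; apply: contra_notN ne => /H ->.
Qed.

Lemma wbr_cartanU (K : fieldType) (n : nat) c (k : wkey n) :
  wbr (@hom K n c 0) << k >> = dotK c k.1 *: << k >>.
Proof.
rewrite /hom wbr_suml /dotK scaler_suml; apply: eq_bigr => i _.
rewrite wbrZl wbrU; case: k => b j /=.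
by rewrite /wbr_basis /wbasis add0r mxE scale0r subr0 scalerA.
Qed.

Lemma wbr_cartan (K : fieldType) (n : nat) c (F : Witt K n) :
  wbr (@hom K n c 0) F = \sum_(k <- msupp F) (F@_k * dotK c k.1) *: << k >>.
Proof.
rewrite {1}(malg_decomp F) wbr_sumr; apply: eq_bigr => k _.
by rewrite wbrZr wbr_cartanU scalerA.
Qed.

Lemma alg1 (R : comRingType) (V : lmodType R) (x y u v : R) (p q : V) :
  x *: (y *: (u *: p - v *: q)) = (x * y * u) *: p - (x * y * v) *: q.
Proof. by rewrite !scalerBr !scalerA. Qed.

Lemma alg2 (R : comRingType) (V : lmodType R) (m : nat) (d1 d2 ci aj : 'I_m -> R) (P : 'I_m -> V) :
  \sum_i \sum_j ((d1 i * d2 j * ci i) *: P j - (d1 i * d2 j * aj j) *: P i) =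
  (\sum_i d1 i * ci i) *: (\sum_j d2 j *: P j) - (\sum_j d2 j * aj j) *: (\sum_i d1 i *: P i).
Proof.
under eq_bigr do rewrite sumrB.
rewrite sumrB; congr (_ - _).
  rewrite scaler_suml; apply: eq_bigr => i _; rewrite scaler_sumr; apply: eq_bigr => j _.
  by rewrite scalerA mulrAC.
rewrite exchange_big /= scaler_suml; apply: eq_bigr => j _; rewrite scaler_sumr; apply: eq_bigr => i _.
by rewrite scalerA; congr (_ *: _); rewrite -mulrA mulrC.
Qed.

Lemma wbr_hom (K : fieldType) (n : nat) d1 d2 a c :
  wbr (@hom K n d1 a) (@hom K n d2 c) =
  dotK d1 c *: @hom K n d2 (a + c) - dotK d2 a *: @hom K n d1 (a + c).
Proof.
have L : wbr (@hom K n d1 a) (@hom K n d2 c) = \sum_i \sum_j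
   ((d1 i * d2 j * (c i 0)%:~R) *: (<<(a + c, j)>> : Witt K n)
    - (d1 i * d2 j * (a j 0)%:~R) *: (<<(a + c, i)>> : Witt K n)).
  rewrite /hom wbr_suml; apply: eq_bigr => i _.
  rewrite wbrZl wbr_sumr scaler_sumr; apply: eq_bigr => j _.
  rewrite wbrZr wbrU /wbr_basis /wbasis; exact: alg1.
rewrite L; exact: (alg2 d1 d2 (fun i => (c i 0)%:~R) (fun j => (a j 0)%:~R) (fun j => (<<(a + c, j)>> : Witt K n))).
Qed.

Lemma wbr_basisE (K : fieldType) (n : nat) (k1 k2 k : wkey n) :
  k.1 != k1.1 + k2.1 -> (wbr_basis K k1 k2)@_k = 0.
Proof.
case: k1 k2 => [a i] [b j] /= nk; rewrite /wbr_basis /wbasis mcoeffB [X in X - _]mcZU [X in _ - X]mcZU.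
have h : forall l, ((a + b, l) == k) = false.
  by move=> l; apply/negbTE; apply: contra nk => /eqP <-.
by rewrite !h !mulr0 subr0.
Qed.

Lemma msupp_wbr (K : fieldType) (n : nat) (f g : Witt K n) k :
  k \in msupp (wbr f g) ->
  exists k1, exists k2, [/\ k1 \in msupp f, k2 \in msupp g & k.1 = k1.1 + k2.1].
Proof.
rewrite -mcoeff_neq0 => H; apply: NNPP => Hn; move: H; apply/negP; rewrite negbK.
rewrite /wbr raddf_sum /= big1_seq // => k1 k1f; rewrite raddf_sum /= big1_seq // => k2 k2g.
rewrite mcoeffZ wbr_basisE ?mulr0 //; apply/negP => /eqP e; apply: Hn.
by exists k1, k2.
Qed.

Definition lowp (n : nat) (lt : rel 'cV[int]_n) (B : 'cV[int]_n) (K : fieldType) (r : Witt K n) :=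
  forall k, k \in msupp r -> lt k.1 B.
Definition lep (n : nat) (lt : rel 'cV[int]_n) (B : 'cV[int]_n) (K : fieldType) (r : Witt K n) :=
  forall k, k \in msupp r -> k.1 = B \/ lt k.1 B.

Lemma lowp0 n lt B (K : fieldType) : lowp lt B (0 : Witt K n).
Proof. by move=> k; rewrite msupp0. Qed.
Lemma lowpD n lt B (K : fieldType) (r1 r2 : Witt K n) :
  lowp lt B r1 -> lowp lt B r2 -> lowp lt B (r1 + r2).
Proof.
move=> h1 h2 k /(fsubsetP (msuppD_le _ _)); rewrite in_fsetU => /orP[]; [exact: h1|exact: h2].
Qed.
Lemma lowpZ n lt B (K : fieldType) c (r : Witt K n) : lowp lt B r -> lowp lt B (c *: r).
Proof. by move=> h k /(fsubsetP (msuppZ_le _ _)); apply: h. Qed.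
Lemma lowp_lep n lt B (K : fieldType) (r : Witt K n) : lowp lt B r -> lep lt B r.
Proof. by move=> h k /h; right. Qed.
Lemma lep_hom n lt B (K : fieldType) d : lep lt B (@hom K n d B) :> Prop.
Proof. by move=> k /msupp_hom; left. Qed.

Section Core.
Variable (n : nat) (lt : rel 'cV[int]_n).
Hypothesis ltirr : forall x, ~~ lt x x.
Hypothesis lttr : forall x y z, lt x y -> lt y z -> lt x z.
Hypothesis ltD : forall x y z, lt x y -> lt (x + z) (y + z).

Lemma ltD2 x y z w : lt x y -> lt z w -> lt (x + z) (y + w).
Proof. move=> h1 h2; apply: lttr (ltD z h1) _; rewrite ![y + _]addrC; exact: ltD. Qed.
Lemma ltDl x y z : lt x y -> lt (z + x) (z + y).
Proof. by move=> h; rewrite ![z + _]addrC; apply: ltD. Qed.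

Lemma wbr_low (K : fieldType) (f g : Witt K n) A B :
  lep lt A f -> lep lt B g -> lowp lt A f \/ lowp lt B g -> lowp lt (A + B) (wbr f g).
Proof.
move=> hf hg hor k /msupp_wbr [k1 [k2 [k1f k2g ->]]].
case: (hf _ k1f) => [e1|l1]; case: (hg _ k2g) => [e2|l2].
- case: hor => [/(_ _ k1f)|/(_ _ k2g)]; [rewrite e1|rewrite e2] => H; exfalso; exact: (negP (ltirr _) H).
- by rewrite e1; apply: ltDl.
- by rewrite e2; apply: ltD.
- exact: ltD2.
Qed.
End Core.

Definition polyop (K : fieldType) (n : nat) (L : Witt K n -> Witt K n) (p : {poly K}) f :=
  \sum_(i < size p) p`_i *: iter i L f.
Definition LF (K : fieldType) (n : nat) (h : Witt K n) :=
  forall f, exists2 p : {poly K}, p != 0 & polyop (wbr h) p f = 0.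

Lemma dotKD (K : fieldType) (n : nat) (d : 'I_n -> K) x y : dotK d (x + y) = dotK d x + dotK d y.
Proof. by rewrite /dotK -big_split; apply: eq_bigr => j _; rewrite mxE intrD mulrDr. Qed.

Lemma alg3 (R : comRingType) (V : lmodType R) (mu x t : R) (H A Y : V) :
  mu *: (x *: H - t *: H) + A + Y = (mu * (x - t)) *: H + (A + Y).
Proof. by rewrite -scalerBl scalerA addrA. Qed.

Section Core2.
Variable (n : nat) (lt : rel 'cV[int]_n).
Hypothesis ltirr : forall x, ~~ lt x x.
Hypothesis lttr : forall x y z, lt x y -> lt y z -> lt x z.
Hypothesis ltD : forall x y z, lt x y -> lt (x + z) (y + z).
Variable (K : fieldType).
Hypothesis charK0 : [pchar K] =i pred0.

Lemma core (h : Witt K n) a i0 :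
  lep lt a h -> lt 0 a -> h@_(a, i0) != 0 -> ~ LF h.
Proof.
move=> hle lt0a hi0 hLF.
pose d := fun j => h@_(a, j).
pose hr := h - @hom K n d a.
have hE : h = @hom K n d a + hr by rewrite /hr addrC subrK.
have hrlow : lowp lt a hr.
  move=> k; rewrite -mcoeff_neq0 /hr mcoeffB [X in _ - X]homE; case: (k.1 =P a) => [e|ne].
    by rewrite /d -e -surjective_pairing subrr eqxx.
  rewrite subr0 mcoeff_neq0 => /hle [e|//]; by case: ne.
pose s := dotK d a.
pose b : 'cV[int]_n := if s == 0 then \col_j ((j == i0)%:R : int) else a + a.
pose B k := iter k (fun x => a + x) b.
pose mu k := \prod_(m < k) (dotK d (B m) - s).
pose G k := iter k (wbr h) (@hom K n d b).
have inv k : exists r, G k = mu k *: @hom K n d (B k) + r /\ lowp lt (B k) r.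
  elim: k => [|k [r [Gk rl]]].
    by exists 0; rewrite /G /mu /B /= big_ord0 scale1r addr0; split => //; apply: lowp0.
  exists (wbr (@hom K n d a) r + (mu k *: wbr hr (@hom K n d (B k)) + wbr hr r)); split.
    rewrite /G iterS -/(G k) Gk {1}hE wbrAl !wbrAr wbrZr wbr_hom wbrZr.
    have -> : mu k.+1 = mu k * (dotK d (B k) - s) by rewrite /mu big_ord_recr.
    have -> : B k.+1 = a + B k by [].
    exact: alg3.
  have -> : B k.+1 = a + B k by [].
  apply: lowpD; first by apply: (wbr_low ltirr lttr ltD); [apply: lep_hom| apply: lowp_lep|right].
  apply: lowpD; first apply: lowpZ.
    by apply: (wbr_low ltirr lttr ltD); [apply: lowp_lep|apply: lep_hom|left].
  by apply: (wbr_low ltirr lttr ltD); [apply: lowp_lep|apply: lowp_lep|left].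
have coefG1 k j : (G k)@_(B k, j) = mu k * d j.
  have [r [-> rl]] := inv k; rewrite mcoeffD [X in X + _]mcoeffZ [X in _ * X + _]homE eqxx /=.
  rewrite mcoeff_outdom ?addr0 //; apply/negP => /rl /=; apply/negP; exact: ltirr.
have coefG0 k c j : c != B k -> ~~ lt c (B k) -> (G k)@_(c, j) = 0.
  move=> ne nl; have [r [-> rl]] := inv k; rewrite mcoeffD [X in X + _]mcoeffZ [X in _ * X + _]homE /= (negbTE ne) mulr0 add0r.
  by rewrite mcoeff_outdom //; apply/negP => /rl /=; apply/negP.
have ltS x : lt x (a + x) by have := ltD x lt0a; rewrite add0r.
have ltB i m : (i < m)%N -> lt (B i) (B m).
  elim: m => // m IH; rewrite ltnS leq_eqVlt => /orP[/eqP ->|/IH h1]; first exact: ltS.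
  exact: lttr h1 (ltS _).
have dotB k : dotK d (B k) = dotK d b + k%:R * s.
  elim: k => [|k IH]; first by rewrite mul0r addr0.
  have -> : B k.+1 = a + B k by [].
  by rewrite dotKD IH -/s mulrSr mulrDl mul1r addrCA [s + _]addrC.
have nat0 (k : nat) : (k.+1)%:R != 0 :> K.
  by move/pcharf0P: charK0 => ->.
have fac k : dotK d (B k) - s != 0.
  rewrite dotB /b; case: ifP => [/eqP s0|/negbT s0].
    rewrite s0 mulr0 addr0 subr0 /dotK (bigD1 i0) //= mxE eqxx mulr1 big1 ?addr0 //.
    by move=> j nj; rewrite mxE (negbTE nj) mulr0.
  rewrite dotKD -/s.
  have -> : s + s + k%:R * s - s = (k.+1)%:R * s by rewrite mulrSr; ring.
  by rewrite mulf_neq0.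
have [p p0 pE] := hLF (@hom K n d b).
pose m := (size p).-1.
have sp : size p = m.+1 by rewrite /m prednK // size_poly_gt0.
have := congr1 (mcoeff (B m, i0)) pE; rewrite mcoeff0 /polyop raddf_sum /=.
under eq_bigr do rewrite mcoeffZ.
rewrite sp big_ord_recr /= big1 ?add0r.
  rewrite [X in _ * X = _](coefG1 m i0) => /eqP; apply/negP.
  rewrite !mulf_neq0 //; last by rewrite prodf_seq_neq0; apply/allP => x _; apply: fac.
  by have := lead_coef_eq0 p; rewrite lead_coefE -/m => ->.
move=> i _; rewrite [X in _ * X](coefG0 i (B m) i0) ?mulr0 //.
  by apply/eqP => e; have := ltB i m (ltn_ord i); rewrite -e; apply/negP.
by apply/negP => h2; have := lttr (ltB i m (ltn_ord i)) h2; apply/negP.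
Qed.
End Core2.

Definition lexlt (n : nat) (x y : 'cV[int]_n) : bool :=
  [exists i : 'I_n, [forall j : 'I_n, (j < i)%N ==> (x j 0 == y j 0)] && (x i 0 < y i 0)].

Lemma lex_irr n (x : 'cV[int]_n) : ~~ lexlt x x.
Proof. by apply/existsP => -[i /andP[_]]; rewrite ltxx. Qed.

Lemma lex_tr n (x y z : 'cV[int]_n) : lexlt x y -> lexlt y z -> lexlt x z.
Proof.
move=> /existsP[i1 /andP[/forallP e1 l1]] /existsP[i2 /andP[/forallP e2 l2]].
apply/existsP; case: (ltngtP i1 i2) => [lt12|lt21|eq12].
- exists i1; apply/andP; split.
    apply/forallP => j; apply/implyP => ji.
    by rewrite (eqP (implyP (e1 j) ji)) (eqP (implyP (e2 j) (ltn_trans ji lt12))).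
  by rewrite -(eqP (implyP (e2 i1) lt12)).
- exists i2; apply/andP; split.
    apply/forallP => j; apply/implyP => ji.
    by rewrite (eqP (implyP (e1 j) (ltn_trans ji lt21))) (eqP (implyP (e2 j) ji)).
  by rewrite (eqP (implyP (e1 i2) lt21)).
- have e : i1 = i2 by apply: val_inj.
  exists i1; apply/andP; split.
    apply/forallP => j; apply/implyP => ji.
    by rewrite (eqP (implyP (e1 j) ji)) (eqP (implyP (e2 j) _)) // -e.
  by apply: lt_trans l1 _; rewrite e.
Qed.

Lemma lex_D n (x y z : 'cV[int]_n) : lexlt x y -> lexlt (x + z) (y + z).
Proof.
move=> /existsP[i /andP[/forallP e l]]; apply/existsP; exists i; apply/andP; split.
  apply/forallP => j; apply/implyP => ji; rewrite !mxE.
  by rewrite (eqP (implyP (e j) ji)).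
by rewrite !mxE ltrD2r.
Qed.

Lemma lex_total n (x y : 'cV[int]_n) : x != y -> lexlt x y || lexlt y x.
Proof.
move=> nxy.
have [i0 Hi0] : exists i0 : 'I_n, x i0 0 != y i0 0.
  apply: NNPP => H; move: nxy; apply/negP; rewrite negbK; apply/eqP/matrixP => i j.
  rewrite (ord1 j); apply: NNPP => H2; apply: H; exists i; by apply/eqP.
case: (@arg_minnP _ i0 (fun i : 'I_n => x i 0 != y i 0) (fun i : 'I_n => i : nat) Hi0) => i Hi Hmin.
have eqb : [forall j : 'I_n, (j < i)%N ==> (x j 0 == y j 0)].
  apply/forallP => j; apply/implyP => ji; apply: contraLR ji => nj.
  by rewrite -leqNgt; apply: Hmin.
case/orP: (lt_total Hi) => l.
  by apply/orP; left; apply/existsP; exists i; rewrite eqb l.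
apply/orP; right; apply/existsP; exists i; rewrite l andbT.
apply/forallP => j; apply/implyP => ji; rewrite eq_sym; exact: (implyP (forallP eqb j) ji).
Qed.

Lemma exmax (T : eqType) (lt : rel T) (s : seq T) x0 :
  (forall x y, x != y -> lt x y || lt y x) -> (forall x y z, lt x y -> lt y z -> lt x z) ->
  x0 \in s -> exists2 a, a \in s & forall x, x \in s -> x = a \/ lt x a.
Proof.
move=> tot tr; elim: s x0 => // x s IH x0 _.
have [xs|nxs] := boolP (has predT s).
  case/hasP: xs => y ys _; case: (IH y ys) => a as_ Ha.
  have [e|ne] := eqVneq x a.
    exists a; first by rewrite in_cons as_ orbT.
    by move=> z; rewrite in_cons => /orP[/eqP ->|/Ha //]; left.
  case/orP: (tot _ _ ne) => l.
    exists a; first by rewrite in_cons as_ orbT.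
    by move=> z; rewrite in_cons => /orP[/eqP ->|/Ha //]; right.
  exists x; first by rewrite in_cons eqxx.
  move=> z; rewrite in_cons => /orP[/eqP ->|/Ha [->|l2]]; [by left|by right|].
  by right; apply: tr l2 l.
exists x; first by rewrite in_cons eqxx.
move=> z; rewrite in_cons => /orP[/eqP ->|zs]; first by left.
by case/hasP: nxs; exists z.
Qed.

Lemma LF_cartan (K : fieldType) (n : nat) (charK0 : [pchar K] =i pred0) (h : Witt K n) :
  LF h -> in_xH 0 h.
Proof.
move=> hLF k kh; apply: NNPP => nz.
pose D := [seq k.1 | k <- msupp h].
have kD : k.1 \in D by apply: map_f.
have inD x : x \in D -> exists i0, h@_(x, i0) != 0.
  case/mapP => k' k'h ->; exists k'.2; rewrite -surjective_pairing mcoeff_neq0 //.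
have lepD (lt : rel 'cV[int]_n) a : (forall x, x \in D -> x = a \/ lt x a) -> lep lt a h.
  by move=> H k' k'h; apply: H; apply: map_f.
have [amax amaxD Hmax] := exmax (@lex_total n) (@lex_tr n) kD.
have [amin aminD Hmin] := exmax (lt := fun x y => lexlt y x)
   (fun x y nxy => ltac:(by rewrite orbC; apply: lex_total))
   (fun x y z l1 l2 => lex_tr l2 l1) kD.
have [l0|nl0] := boolP (lexlt 0 amax).
  have [i0 hi0] := inD _ amaxD.
  by apply: (core (@lex_irr n) (@lex_tr n) (@lex_D n) charK0 (lepD _ _ Hmax) l0 hi0).
have [l1|nl1] := boolP (lexlt amin 0).
  have [i0 hi0] := inD _ aminD.
  apply: (core (lt := fun x y => lexlt y x) (@lex_irr n) (fun x y z l1 l2 => lex_tr l2 l1)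
           (fun x y z l => lex_D z l) charK0 (lepD _ _ Hmin) l1 hi0 hLF).
have le0 : k.1 = 0 \/ lexlt k.1 0.
  have [e|ne] := eqVneq amax 0.
    by case: (Hmax _ kD) => [->|l]; [left|right; rewrite -e].
  have l : lexlt amax 0 by case/orP: (lex_total ne) => // l0'; rewrite l0' in nl0.
  by right; case: (Hmax _ kD) => [->|l2] //; apply: lex_tr l2 l.
have ge0 : k.1 = 0 \/ lexlt 0 k.1.
  have [e|ne] := eqVneq amin 0.
    by case: (Hmin _ kD) => [->|l]; [left|right; rewrite -e].
  have l : lexlt 0 amin by case/orP: (lex_total ne) => // l0'; rewrite l0' in nl1.
  by right; case: (Hmin _ kD) => [->|l2] //; apply: lex_tr l l2.
case: le0 => [//|l]; case: ge0 => [//|l'].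
by move: (lex_irr k.1); rewrite (lex_tr l l').
Qed.

Lemma alg4 (R : comRingType) (V : lmodType R) (I : Type) (r : seq I) (m : nat)
  (q : nat -> R) (f l : I -> R) (P : I -> V) :
  \sum_(i < m) q i *: \sum_(k <- r) (f k * l k ^+ i) *: P k =
  \sum_(k <- r) (f k * \sum_(i < m) q i * l k ^+ i) *: P k.
Proof.
under eq_bigr do rewrite scaler_sumr.
rewrite exchange_big /=; apply: eq_bigr => k _.
rewrite mulr_sumr scaler_suml; apply: eq_bigr => i _.
by rewrite scalerA mulrCA.
Qed.

Lemma iter_cartan (K : fieldType) (n : nat) c (F : Witt K n) j :
  iter j (wbr (@hom K n c 0)) F = \sum_(k <- msupp F) (F@_k * dotK c k.1 ^+ j) *: << k >>.
Proof.
elim: j => [|j IH]; first by rewrite /= {1}(malg_decomp F); apply: eq_bigr => k _; rewrite expr0 mulr1.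
rewrite iterS IH wbr_sumr; apply: eq_bigr => k _.
by rewrite wbrZr wbr_cartanU scalerA exprSr mulrA.
Qed.

Lemma polyop_cartan (K : fieldType) (n : nat) c (F : Witt K n) p :
  polyop (wbr (@hom K n c 0)) p F = \sum_(k <- msupp F) (F@_k * p.[dotK c k.1]) *: << k >>.
Proof.
rewrite /polyop; under eq_bigr do rewrite iter_cartan.
rewrite (@alg4 _ _ _ _ _ (fun i => p`_i)); apply: eq_bigr => k _; by rewrite horner_coef.
Qed.

Lemma LF_cartan0 (K : fieldType) (n : nat) c : LF (@hom K n c 0).
Proof.
move=> F; exists (\prod_(k <- msupp F) ('X - (dotK c k.1)%:P)).
  exact/monic_neq0/monic_prod_XsubC.
rewrite polyop_cartan big1_seq // => k kF.
rewrite horner_prod.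
have -> : \prod_(i <- msupp F) ('X - (dotK c i.1)%:P).[dotK c k.1] = 0.
  apply/eqP; rewrite prodf_seq_eq0; apply/hasP; exists k => //.
  by rewrite /= !hornerE subrr.
by rewrite mulr0 scale0r.
Qed.

Lemma wH_hom (K : fieldType) (n : nat) i : wH K i = @hom K n (fun j => (j == i)%:R) 0.
Proof.
apply/malgP => k; rewrite homE /wH /wbasis mcU1; case: k => a j /=.
rewrite xpair_eqE; have [e|na] := eqVneq a 0.
  by subst a; rewrite eq_sym.
by [].
Qed.

Lemma hom_ext (K : fieldType) (n : nat) (d d' : 'I_n -> K) c :
  (forall j, d j = d' j) -> @hom K n d c = @hom K n d' c.
Proof. by move=> e; rewrite /hom; apply: eq_bigr => j _; rewrite e. Qed.

Lemma iter_hom (K : fieldType) (n : nat) (s : {linear Witt K n -> Witt K n})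
  (shom : lie_hom s) h f j : s (iter j (wbr h) f) = iter j (wbr (s h)) (s f).
Proof.
induction j as [|j IH]; first by change (s f = s f).
change (s (wbr h (iter j (wbr h) f)) = wbr (s h) (iter j (wbr (s h)) (s f))).
by rewrite shom IH.
Qed.

Lemma LF_hom (K : fieldType) (n : nat) (s t : {linear Witt K n -> Witt K n})
  (sK' : cancel t s) (shom : lie_hom s) h : LF h -> LF (s h).
Proof.
move=> hLF F; have [p p0 pE] := hLF (t F); exists p; first exact: p0.
have := congr1 s pE; rewrite linear0 /polyop linear_sum /= => E; apply: (etrans _ E).
rewrite /polyop; apply: eq_bigr => i _; by rewrite linearZ /= (iter_hom shom) sK'.
Qed.

Lemma lie_inv (K : fieldType) (n : nat) (s t : {linear Witt K n -> Witt K n})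
  (sK : cancel s t) (sK' : cancel t s) (shom : lie_hom s) : lie_hom t.
Proof. by move=> f g; apply: (can_inj sK); rewrite shom !sK'. Qed.

Lemma s_wH (K : fieldType) (n : nat) (charK0 : [pchar K] =i pred0)
  (s t : {linear Witt K n -> Witt K n})
  (sK' : cancel t s) (shom : lie_hom s) i :
  s (wH K i) = @hom K n (fun j => Amat s i j) 0.
Proof.
have H : in_xH 0 (s (wH K i)).
  by apply: (LF_cartan charK0); apply: (LF_hom sK' shom); rewrite wH_hom; apply: LF_cartan0.
rewrite {1}(cartanE H); apply: hom_ext => j; by rewrite mxE.
Qed.

Lemma Amat_inv (K : fieldType) (n : nat) (charK0 : [pchar K] =i pred0)
  (s t : {linear Witt K n -> Witt K n})
  (sK : cancel s t) (sK' : cancel t s) (shom : lie_hom s) :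
  Amat t *m Amat s = 1%:M.
Proof.
have thom := lie_inv sK sK' shom.
apply/matrixP => i k; rewrite [LHS]mxE [RHS]mxE.
have E : s (t (wH K i)) = wH K i by rewrite sK'.
rewrite (s_wH charK0 sK thom) /hom linear_sum /= in E.
have E2 := congr1 (mcoeff (0, k)) E.
rewrite raddf_sum /= in E2.
have E3 : \sum_j (s (Amat t i j *: (<<(0, j)>> : Witt K n)))@_(0, k) = \sum_j Amat t i j * Amat s j k.
  apply: eq_bigr => j _; rewrite linearZ /= mcoeffZ.
  have -> : (<<(0, j)>> : Witt K n) = wH K j by [].
  by rewrite (s_wH charK0 sK' shom) homE /= eqxx.
rewrite -E3 E2 /wH /wbasis mcU1 xpair_eqE eqxx /=.
by case: eqP.
Qed.

Lemma fwd (K : fieldType) (n : nat) (charK0 : [pchar K] =i pred0)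
  (s t : {linear Witt K n -> Witt K n}) (sK' : cancel t s) (shom : lie_hom s)
  (alpha : 'cV[int]_n) (f : Witt K n) k :
  in_xH alpha f -> k \in msupp (s f) -> Amat s *m map_mx intr k.1 = map_mx intr alpha.
Proof.
move=> Hf kS; apply/matrixP => i z; rewrite (ord1 z) [LHS]mxE [RHS]mxE.
under eq_bigr do rewrite [X in _ * X]mxE.
have E1 : wbr (wH K i) f = (alpha i 0)%:~R *: f.
  rewrite wH_hom wbr_cartan [in RHS](malg_decomp f) [RHS]scaler_sumr.
  apply: eq_big_seq => k' k'f; rewrite (Hf _ k'f) [RHS]scalerA.
  have -> : dotK (fun j : 'I_n => (j == i)%:R : K) alpha = (alpha i 0)%:~R.
    rewrite /dotK (bigD1 i) //= eqxx mul1r big1 ?addr0 // => j nj.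
    by rewrite (negbTE nj) mul0r.
  by rewrite [_ * _ in RHS]mulrC.
have E2 : wbr (@hom K n (fun j => Amat s i j) 0) (s f) = (alpha i 0)%:~R *: s f.
  by rewrite -(s_wH charK0 sK' shom i) -shom E1; exact: linearZ.
have E3 := congr1 (mcoeff k) E2.
rewrite wbr_cartan coef_diag [X in _ = X]mcoeffZ [RHS]mulrC in E3.
have nz : (s f)@_k != 0 by rewrite mcoeff_neq0.
exact: (mulfI nz E3).
Qed.

Lemma intr_inj0 (K : fieldType) (charK0 : [pchar K] =i pred0) (x y : int) :
  x%:~R = y%:~R :> K -> x = y.
Proof.
move/eqP; rewrite -subr_eq0 -intrB => h; apply/eqP; rewrite -subr_eq0; move: h.
have nat0 := (iffLR (pcharf0P K) charK0).
case: (x - y) => m.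
  by rewrite -pmulrn nat0.
by rewrite NegzE mulrNz oppr_eq0 -pmulrn nat0.
Qed.

Lemma map_intr_inj (K : fieldType) (charK0 : [pchar K] =i pred0) (n : nat) (u v : 'cV[int]_n) :
  map_mx intr u = map_mx intr v :> 'cV[K]_n -> u = v.
Proof.
move=> H; apply/matrixP => i j; have := congr1 (fun M : 'cV[K]_n => M i j) H; rewrite !mxE.
exact: intr_inj0.
Qed.

Theorem lemma2p6 (K : fieldType) (n : nat)
  (charK0 : [pchar K] =i pred0)
  (sigma sigmainv : {linear Witt K n -> Witt K n})
  (sK : cancel sigma sigmainv) (sK' : cancel sigmainv sigma)
  (shom : lie_hom sigma)
  (alpha : 'cV[int]_n) :
  exists beta : 'cV[int]_n,
    Amat sigmainv *m map_mx intr alpha = map_mx intr beta /\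
    (forall g : Witt K n,
        in_xH beta g <-> exists2 f : Witt K n, in_xH alpha f & g = sigma f).
Proof.
have thom := lie_inv sK sK' shom.
have AB := Amat_inv charK0 sK sK' shom.
have BA := Amat_inv charK0 sK' sK thom.
have [beta Hb] : exists beta : 'cV[int]_n,
    Amat sigmainv *m map_mx intr alpha = map_mx intr beta.
  have [n0|npos] := eqVneq n 0.
    subst n; exists alpha; apply/matrixP => i; exfalso; by case: i => m; rewrite ltn0.
  have npos' : (0 < n)%N by rewrite lt0n.
  pose i0 : 'I_n := Ordinal npos'.
  pose f0 : Witt K n := << (alpha, i0) >>.
  have Hf0 : in_xH alpha f0.
    by move=> k /(fsubsetP msuppU_le); rewrite in_fset1 => /eqP ->.
  have nz : sigma f0 != 0.
    apply/eqP => e; have := congr1 sigmainv e; rewrite sK linear0 => e0.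
    have := congr1 (mcoeff (alpha, i0)) e0; rewrite mcoeff0 /f0 mcU1 eqxx => /eqP.
    by rewrite oner_eq0.
  have : msupp (sigma f0) != fset0.
    apply: contra nz => /eqP e; apply/eqP/malgP => k0; rewrite mcoeff0; apply: mcoeff_outdom; by rewrite e in_fset0.
  case/fset0Pn => k kS.
  exists k.1; rewrite -(fwd charK0 sK' shom Hf0 kS) mulmxA AB mul1mx //.
exists beta; split => // g; split.
  move=> Hg; exists (sigmainv g); last by rewrite sK'.
  move=> k kt; have H := fwd charK0 sK thom Hg kt.
  apply: (map_intr_inj charK0).
  by rewrite -[map_mx intr k.1]mul1mx -BA -mulmxA H -Hb mulmxA BA mul1mx.
case=> f Hf -> k kS; have H := fwd charK0 sK' shom Hf kS.
apply: (map_intr_inj charK0).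
by rewrite -[map_mx intr k.1]mul1mx -AB -mulmxA H Hb.
Qed.
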